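(* With $\mathcal{L}^\ddagger$, $\Gamma_T$, $\Gamma_L$ as defined below and $\Gamma=2\Gamma_T+\Gamma_L$, if $e^{t\mathcal{L}^\ddagger}$ is a unital Schwarz map for every $t\ge 0$, then $\Gamma_T\le\frac23\Gamma$ and $\Gamma_L\le\frac23\Gamma$; in particular $4\Gamma_T\ge\Gamma_L$.
   Context: For $\omega,\gamma_+,\gamma_-,\gamma_z\in\mathbb{R}$, $\mathcal{L}^\ddagger:\mathcal{M}_2\to\mathcal{M}_2$ is $\mathcal{L}^\ddagger(X)=\tfrac{i\omega}{2}[\sigma_z,X]+\gamma_+(\sigma_-X\sigma_+-\tfrac12\{\sigma_-\sigma_+,X\})+\gamma_-(\sigma_+X\sigma_--\tfrac12\{\sigma_+\sigma_-,X\})+\gamma_z(\sigma_zX\sigma_z-X)$, where $\sigma_x,\sigma_y,\sigma_z$ are the Pauli matrices and $\sigma_\pm=\frac12(\sigma_x\pm i\sigma_y)$. $\Gamma_T=\frac{\gamma_++\gamma_-}{2}+2\gamma_z$, $\Gamma_L=\gamma_++\gamma_-$. A unital Schwarz map on $\mathcal{M}_n$ is a linear map $\Phi$ with $\Phi(\mathbb{1})=\mathbb{1}$ and $\Phi(X^\dagger X)\ge\Phi(X)^\dagger\Phi(X)$ for all $X$. *)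

(* Defs.v *)
From mathcomp Require Import all_boot all_order all_algebra all_classical all_reals all_analysis.
From mathcomp Require Import complex.
Set Implicit Arguments. Unset Strict Implicit. Unset Printing Implicit Defensive.
Import Order.TTheory GRing.Theory Num.Theory numFieldNormedType.Exports.
Local Open Scope ring_scope.
Local Open Scope complex_scope.

Section Defs.
Variable R : realType.
Local Notation C := R[i].

Definition mx2 (a b c d : C) : 'M[C]_2 :=
  \matrix_(i < 2, j < 2)
    if (i : nat) == 0%N then (if (j : nat) == 0%N then a else b)
    else (if (j : nat) == 0%N then c else d).

Definition sigma_x : 'M[C]_2 := mx2 0 1 1 0.
Definition sigma_y : 'M[C]_2 := mx2 0 (- 'i) 'i 0.
Definition sigma_z : 'M[C]_2 := mx2 1 0 0 (-1).
Definition sigma_p : 'M[C]_2 := (2 : C)^-1 *: (sigma_x + 'i *: sigma_y).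
Definition sigma_m : 'M[C]_2 := (2 : C)^-1 *: (sigma_x - 'i *: sigma_y).

Definition adj m n (X : 'M[C]_(m, n)) : 'M[C]_(n, m) := map_mx conjc X^T.

Definition commut n (A B : 'M[C]_n) : 'M[C]_n := A * B - B * A.
Definition acommut n (A B : 'M[C]_n) : 'M[C]_n := A * B + B * A.

Definition Ldag (w gp gm gz : R) (X : 'M[C]_2) : 'M[C]_2 :=
  ('i * (w / 2)%:C) *: commut sigma_z X
  + gp%:C *: (sigma_m * X * sigma_p - (2 : C)^-1 *: acommut (sigma_m * sigma_p) X)
  + gm%:C *: (sigma_p * X * sigma_m - (2 : C)^-1 *: acommut (sigma_p * sigma_m) X)
  + gz%:C *: (sigma_z * X * sigma_z - X).

Definition GammaT (gp gm gz : R) : R := (gp + gm) / 2 + 2 * gz.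
Definition GammaL (gp gm : R) : R := gp + gm.

Definition csum (u : nat -> C) : C :=
  (limn (series (fun k => complex.Re (u k)))) +i* (limn (series (fun k => complex.Im (u k)))).

Definition expmap (t : R) (L : 'M[C]_2 -> 'M[C]_2) (X : 'M[C]_2) : 'M[C]_2 :=
  \matrix_(i < 2, j < 2) csum (fun k => ((t ^+ k / (k`!)%:R)%:C * (iter k L X) i j)).

(* positive semidefinite (complex order: 0 <= z means z real and nonnegative) *)
Definition psd n (A : 'M[C]_n) : Prop :=
  forall v : 'cV[C]_n, 0 <= (adj v *m A *m v) 0 0.

Definition unital_schwarz n (Phi : 'M[C]_n.+1 -> 'M[C]_n.+1) : Prop :=
  [/\ (forall (a : C) (X Y : 'M[C]_n.+1), Phi (a *: X + Y) = a *: Phi X + Phi Y),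
      Phi 1 = 1 &
      forall X : 'M[C]_n.+1, psd (Phi (adj X * X) - adj (Phi X) * Phi X)].

End Defs.

(* Main.v *)
Require Import Defs.
From mathcomp Require Import all_boot all_order all_algebra all_classical all_reals all_analysis.
From mathcomp Require Import complex ring lra.
Import Order.TTheory GRing.Theory Num.Theory numFieldNormedType.Exports.
Local Open Scope ring_scope.
Local Open Scope complex_scope.

Section S.
Variable R : realType.
Local Notation C := R[i].
Local Notation cRe := (@complex.Re R).
Local Notation cIm := (@complex.Im R).

Lemma mx2E (a b c d : C) i j : mx2 a b c d i j =
  if (i : nat) == 0%N then (if (j : nat) == 0%N then a else b)
    else (if (j : nat) == 0%N then c else d).
Proof. by rewrite mxE. Qed.

Lemma mx2P (A : 'M[C]_2) : A = mx2 (A 0 0) (A 0 1) (A 1 0) (A 1 1).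
Proof.
apply/matrixP => i j; rewrite mx2E.
case: i => [[|[|//]] Hi]; case: j => [[|[|//]] Hj] /=;
  by congr (A _ _); apply: val_inj.
Qed.

Lemma mx2_eq (a b c d a' b' c' d' : C) : a = a' -> b = b' -> c = c' -> d = d' ->
  mx2 a b c d = mx2 a' b' c' d'.
Proof. by move=> -> -> -> ->. Qed.

Lemma mx2_mul (a b c d a' b' c' d' : C) :
  mx2 a b c d * mx2 a' b' c' d' = mx2 (a*a' + b*c') (a*b'+b*d') (c*a'+d*c') (c*b'+d*d').
Proof.
apply/matrixP => i j; rewrite !mxE !big_ord_recl big_ord0 !mx2E.
by case: i => [[|[|//]] Hi]; case: j => [[|[|//]] Hj]; rewrite /= ?addr0 /=; congr (_ * _ + _ * _); rewrite !mxE /=. 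
Qed.

Lemma mx2_add (a b c d a' b' c' d' : C) :
  mx2 a b c d + mx2 a' b' c' d' = mx2 (a+a') (b+b') (c+c') (d+d').
Proof.
apply/matrixP => i j; rewrite !mxE.
by case: i => [[|[|//]] Hi]; case: j => [[|[|//]] Hj].
Qed.

Lemma mx2_opp (a b c d : C) : - mx2 a b c d = mx2 (-a) (-b) (-c) (-d).
Proof.
apply/matrixP => i j; rewrite !mxE.
by case: i => [[|[|//]] Hi]; case: j => [[|[|//]] Hj].
Qed.

Lemma mx2_scale (k a b c d : C) : k *: mx2 a b c d = mx2 (k*a) (k*b) (k*c) (k*d).
Proof.
apply/matrixP => i j; rewrite !mxE.
by case: i => [[|[|//]] Hi]; case: j => [[|[|//]] Hj].
Qed.

Lemma mx2_1 : (1 : 'M[C]_2) = mx2 1 0 0 1.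
Proof.
apply/matrixP => i j; rewrite !mxE.
by case: i => [[|[|//]] Hi]; case: j => [[|[|//]] Hj].
Qed.

Lemma ii : 'i * 'i = -1 :> C.
Proof. by rewrite -expr2 sqr_i. Qed.

Lemma sigma_pE : sigma_p R = mx2 0 1 0 0.
Proof.
rewrite /sigma_p /sigma_x /sigma_y mx2_scale mx2_add mx2_scale.
have h2 : (2 : C) != 0 by rewrite pnatr_eq0.
apply: mx2_eq; rewrite ?mulr0 ?addr0 ?add0r; try done.
all: rewrite ?mulr0 ?mulrN ?ii ?opprK ?addrN ?mulr0 //.
by field.
Qed.

Lemma sigma_mE : sigma_m R = mx2 0 0 1 0.
Proof.
rewrite /sigma_m /sigma_x /sigma_y !(mx2_scale, mx2_opp, mx2_add).
have h2 : (2 : C) != 0 by rewrite pnatr_eq0.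
apply: mx2_eq; rewrite ?mulr0 ?oppr0 ?addr0 ?add0r; try done.
all: rewrite ?mulr0 ?mulrN ?ii ?opprK ?addrN ?mulr0 ?mulr1 ?oppr0 ?subr0 ?addr0 //.
by field.
Qed.

Definition lam (w gp gm gz : R) : C := 'i * w%:C - (GammaT gp gm gz)%:C.
Definition lam' (w gp gm gz : R) : C := - 'i * w%:C - (GammaT gp gm gz)%:C.

Lemma LdagE w gp gm gz a b c d :
  Ldag w gp gm gz (mx2 a b c d) =
  mx2 (gm%:C * (d - a)) (lam w gp gm gz * b) (lam' w gp gm gz * c) (gp%:C * (a - d)).
Proof.
rewrite /Ldag sigma_pE sigma_mE /sigma_z /commut /acommut /lam /lam' /GammaT.
rewrite !(mx2_mul, mx2_add, mx2_opp, mx2_scale).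
have h2 : (2 : C) != 0 by rewrite pnatr_eq0.
rewrite !rmorphD !rmorphM /= !rmorphV ?unitfE ?pnatr_eq0 //= !rmorph_nat.
by apply: mx2_eq; field.
Qed.
Lemma adj_mx2 (a b c d : C) : adj (mx2 a b c d) = mx2 a^* c^* b^* d^*.
Proof.
apply/matrixP => i j; rewrite !mxE.
by case: i => [[|[|//]] Hi]; case: j => [[|[|//]] Hj].
Qed.

Lemma Re_conj_mul (z : C) : cRe (z^* * z) = cRe z ^+ 2 + cIm z ^+ 2.
Proof. by case: z => a b /=; ring. Qed.

Lemma adj_delta (j : 'I_2) : adj (delta_mx j 0 : 'cV[C]_2) = delta_mx 0 j.
Proof.
apply/matrixP => a b; rewrite !mxE conjc_nat.
by rewrite andbC.
Qed.

Lemma psd_entry (M : 'M[C]_2) (j : 'I_2) : psd M -> 0 <= cRe (M j j).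
Proof.
move=> /(_ (delta_mx j 0)).
rewrite adj_delta.
have -> : ((delta_mx 0 j : 'rV[C]_2) *m M *m (delta_mx j 0 : 'cV[C]_2)) 0 0 = M j j.
  by rewrite -rowE -colE !mxE.
by rewrite lecE => /andP[_].
Qed.

Lemma schwarz_entry (Phi : 'M[C]_2 -> 'M[C]_2) :
  (forall X, psd (Phi (adj X * X) - adj (Phi X) * Phi X)) ->
  forall X (j k : 'I_2), cRe (Phi X k j) ^+ 2 <= cRe (Phi (adj X * X) j j).
Proof.
move=> H X j k; have := @psd_entry _ j (H X).
rewrite !mxE !big_ord_recl big_ord0 addr0 !mxE.
rewrite [cRe _]/= .
set Y := Phi X; set Z := Phi (adj X * X).
have -> : cRe (Z j j - ((Y 0 j)^* * Y 0 j + (Y (lift ord0 ord0) j)^* * Y (lift ord0 ord0) j))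
   = cRe (Z j j) - (cRe ((Y 0 j)^* * Y 0 j) + cRe ((Y (lift ord0 ord0) j)^* * Y (lift ord0 ord0) j)).
  by rewrite !raddfB /= raddfD.
rewrite !Re_conj_mul.
case: k => [[|[|//]] Hk].
- have -> : Ordinal Hk = 0 by apply: val_inj.
  have := sqr_ge0 (cIm (Y 0 j)); have := sqr_ge0 (cIm (Y (lift ord0 ord0) j)).
  have := sqr_ge0 (cRe (Y (lift ord0 ord0) j)); lra.
- have -> : Ordinal Hk = lift ord0 ord0 by apply: val_inj.
  have := sqr_ge0 (cIm (Y 0 j)); have := sqr_ge0 (cIm (Y (lift ord0 ord0) j)).
  have := sqr_ge0 (cRe (Y 0 j)); lra.
Qed.

Definition dstep (gp gm : R) (p : R * R) : R * R := (gm * (p.2 - p.1), gp * (p.1 - p.2)).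

Lemma iterE w gp gm gz k (a d : R) (b c : C) :
  iter k (Ldag w gp gm gz) (mx2 a%:C b c d%:C) =
  mx2 ((iter k (dstep gp gm) (a, d)).1)%:C (lam w gp gm gz ^+ k * b)
      (lam' w gp gm gz ^+ k * c) ((iter k (dstep gp gm) (a, d)).2)%:C.
Proof.
elim: k => [|k IH]; first by rewrite /= !expr0 !mul1r.
rewrite iterS IH LdagE; apply: mx2_eq.
- by rewrite /= rmorphM rmorphB.
- by rewrite exprS mulrA.
- by rewrite exprS mulrA.
- by rewrite /= rmorphM rmorphB.
Qed.

Lemma Re_expmap t L Y (i j : 'I_2) :
  cRe (expmap t L Y i j) = limn (series (fun k => t ^+ k / (k`!)%:R * cRe (iter k L Y i j))).
Proof.
rewrite mxE /csum /=; congr (limn (series _)); apply: funext => k.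
by case: (iter k L Y i j) => a b /=; ring.
Qed.

Lemma dbound gp gm k (a d : R) :
  `|(iter k (dstep gp gm) (a, d)).1| + `|(iter k (dstep gp gm) (a, d)).2|
   <= (`|gm| + `|gp|) ^+ k * (`|a| + `|d|).
Proof.
elim: k => [|k IH]; first by rewrite /= expr0 mul1r.
rewrite iterS; set p := iter k _ _ ; rewrite /dstep /= !normrM.
have h1 := ler_normB p.2 p.1; have h2 := ler_normB p.1 p.2.
have g1 := normr_ge0 gm; have g2 := normr_ge0 gp.
rewrite exprS -mulrA.
apply: le_trans (_ : (`|gm| + `|gp|) * (`|p.1| + `|p.2|) <= _).
  nra.
apply: ler_wpM2l; first by rewrite addr_ge0.
exact: IH.
Qed.

Lemma cbound (x y : R) k :
  `|cRe ((x +i* y) ^+ k)| + `|cIm ((x +i* y) ^+ k)| <= (`|x| + `|y|) ^+ k.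
Proof.
elim: k => [|k IH]; first by rewrite /= expr0 normr1 normr0 addr0.
rewrite exprS; case: ((x +i* y) ^+ k) IH => a b /= IH.
have h1 := ler_normB (x * a) (y * b); have h2 := ler_normD (x * b) (y * a).
rewrite !normrM in h1 h2.
have g1 := normr_ge0 x; have g2 := normr_ge0 y.
apply: le_trans (_ : (`|x| + `|y|) * (`|a| + `|b|) <= _).
  nra.
rewrite [in X in _ <= X]exprS; by apply: ler_wpM2l; first by rewrite addr_ge0.
Qed.

Lemma lamE w gp gm gz : lam w gp gm gz = (- GammaT gp gm gz) +i* w.
Proof. by rewrite /lam /=; apply/eqP; rewrite eq_complex /=; apply/andP; split; apply/eqP; ring. Qed.

Lemma lam'E w gp gm gz : lam' w gp gm gz = (- GammaT gp gm gz) +i* (- w).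
Proof. by rewrite /lam' /=; apply/eqP; rewrite eq_complex /=; apply/andP; split; apply/eqP; ring. Qed.

Lemma series_fo (g : nat -> R) (N t : R) : 0 <= N -> (forall k, `|g k| <= N ^+ k) ->
  0 <= t -> 2 * (t * N) <= 1 ->
  g 0%N + t * g 1%N - 2 * (t*N)^+2 <= limn (series (fun k => t^+k / (k`!)%:R * g k))
  <= g 0%N + t * g 1%N + 2 * (t*N)^+2.
Proof.
move=> N0 gN t0 xh.
set h := fun k => t^+k / (k`!)%:R * g k.
set x := t * N.
have x0 : 0 <= x by rewrite mulr_ge0.
have x2 : 2 * x <= 1 by [].
have hb k : `|h k| <= x ^+ k.
  have f1 : 1 <= (k`!)%:R :> R by rewrite ler1n fact_gt0.
  have fi : (k`!)%:R^-1 <= 1 :> R by rewrite invf_le1 // (lt_le_trans ltr01 f1).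
  have fi0 : 0 <= (k`!)%:R^-1 :> R by rewrite invr_ge0 ler0n.
  have tk : 0 <= t ^+ k by rewrite exprn_ge0.
  rewrite /h /x exprMn normrM normrM (ger0_norm tk) (ger0_norm fi0).
  rewrite -mulrA; apply: ler_wpM2l => //.
  apply: le_trans _ (gN k); rewrite -[leRHS]mul1r.
  exact: (ler_wpM2r (normr_ge0 _) fi).
clearbody x.
have cvh : cvgn (series h).
  apply: normed_cvg.
  apply: (@series_le_cvg _ _ (geometric 1 x)) => //.
  - by move=> n; rewrite normr_ge0.
  - by move=> n; rewrite /geometric /= mul1r exprn_ge0.
  - by move=> n; rewrite /geometric /= mul1r.
  - apply: is_cvg_geometric_series; rewrite ger0_norm //; lra.
have part n : `|series h n.+2 - (g 0%N + t * g 1%N)| <= 2 * x^+2 - 2 * x^+(n.+2).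
  elim: n => [|n IH].
    rewrite !seriesSr /series /= big_geq // add0r /h /= expr0 expr1 !mul1r.
    rewrite (_ : 0`! = 1)%N // (_ : 1`! = 1)%N // !mulr1n invr1 mulr1 mul1r.
    by rewrite subrr normr0 subrr.
  rewrite seriesSr.
  have -> : series h n.+2 + h n.+2 - (g 0%N + t * g 1%N) =
     (series h n.+2 - (g 0%N + t * g 1%N)) + h n.+2 by ring.
  apply: le_trans (ler_normD _ _) _.
  have := hb n.+2; have := exprn_ge0 n.+2 x0.
  rewrite [x ^+ n.+3]exprS; nra.
have bnd : \forall n \near \oo%classic, `|series h n - (g 0%N + t * g 1%N)| <= 2 * x^+2.
  exists 2%N => // n /= Hn.
  have -> : n = (n - 2).+2 by rewrite -addn2 subnK.
  apply: le_trans (part _) _.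
  have := exprn_ge0 (n - 2).+2 x0; lra.
apply/andP; split.
- apply: limr_ge => //; apply: filterS bnd => n; rewrite ler_norml; lra.
- apply: limr_le => //; apply: filterS bnd => n; rewrite ler_norml; lra.
Qed.

Lemma lim0 (a K c : R) : 0 < c -> 0 <= K ->
  (forall t, 0 < t -> t <= c -> 0 <= a + K * t) -> 0 <= a.
Proof.
move=> c0 K0 H; rewrite leNgt; apply/negP => a0.
set t := Num.min c (- a / (2 * (K + 1))).
have K1 : 0 < 2 * (K + 1) by lra.
have t0 : 0 < t by rewrite lt_min c0 /= divr_gt0 //; lra.
have tc : t <= c by rewrite ge_min lexx.
have ta : t <= - a / (2 * (K + 1)) by rewrite ge_min lexx orbT.
have ta' : t * (2 * (K + 1)) <= - a by rewrite -ler_pdivlMr.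
have := H t t0 tc; nra.
Qed.

Lemma final_alg (t M N1 N2 N3 gm gp GT A B Cz A' B' Cz' x y : R) :
  0 < t ->
  (t * N1) ^+ 2 <= t * (t * M ^+ 2) ->
  (t * N2) ^+ 2 <= t * (t * M ^+ 2) ->
  (t * N3) ^+ 2 <= t * (t * M ^+ 2) ->
  A <= 0 + t * gm + 2 * (t * N1) ^+ 2 ->
  B <= 1 + t * - gp + 2 * (t * N1) ^+ 2 ->
  1 + t * - GT - 2 * (t * N2) ^+ 2 <= Cz ->
  A' <= 0 + t * gp + 2 * (t * N1) ^+ 2 ->
  B' <= 1 + t * - gm + 2 * (t * N1) ^+ 2 ->
  1 + t * - GT - 2 * (t * N3) ^+ 2 <= Cz' ->
  x ^+ 2 <= A -> Cz ^+ 2 <= B -> y ^+ 2 <= A' -> Cz' ^+ 2 <= B' ->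
  [/\ 0 <= t * (gm + 6 * M^+2 * t), 0 <= t * (gp + 6 * M^+2 * t),
      0 <= t * (2 * GT - gp + 6 * M^+2 * t) & 0 <= t * (2 * GT - gm + 6 * M^+2 * t)].
Proof.
move=> t0 q1 q2 q3 F1 F2 F3 F4 F5 F6 S1 S2 S3 S4.
have sq (z : R) : 2 * z - 1 <= z ^+ 2 by have := sqr_ge0 (z - 1); rewrite sqrrB; lra.
have : 0 <= t * (t * M ^+ 2) by apply: mulr_ge0; [exact: ltW | apply: mulr_ge0; [exact: ltW | exact: sqr_ge0]].
have := sq Cz; have := sq Cz'; have := sqr_ge0 x; have := sqr_ge0 y.
have -> : t * (gm + 6 * M^+2 * t) = t * gm + 6 * (t * (t * M ^+ 2)) by ring.
have -> : t * (gp + 6 * M^+2 * t) = t * gp + 6 * (t * (t * M ^+ 2)) by ring.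
have -> : t * (2 * GT - gp + 6 * M^+2 * t) = 2 * (t * GT) - t * gp + 6 * (t * (t * M ^+ 2)) by ring.
have -> : t * (2 * GT - gm + 6 * M^+2 * t) = 2 * (t * GT) - t * gm + 6 * (t * (t * M ^+ 2)) by ring.
move: F2 F3 F5 F6; rewrite !mulrN.
move=> *; split.
- lra.
- lra.
- lra.
- lra.
Qed.

Section Main.
Variables (w gp gm gz : R).
Local Notation L := (Ldag w gp gm gz).

Lemma RE00 t a d b c : cRe (expmap t L (mx2 a%:C b c d%:C) 0 0) =
  limn (series (fun k => t ^+ k / (k`!)%:R * (iter k (dstep gp gm) (a, d)).1)).
Proof. rewrite Re_expmap; congr (limn (series _)); apply: funext => k; by rewrite iterE mx2E. Qed.
Lemma RE11 t a d b c : cRe (expmap t L (mx2 a%:C b c d%:C) 1 1) =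
  limn (series (fun k => t ^+ k / (k`!)%:R * (iter k (dstep gp gm) (a, d)).2)).
Proof. rewrite Re_expmap; congr (limn (series _)); apply: funext => k; by rewrite iterE mx2E. Qed.
Lemma RE01 t a d b c : cRe (expmap t L (mx2 a%:C b c d%:C) 0 1) =
  limn (series (fun k => t ^+ k / (k`!)%:R * cRe (lam w gp gm gz ^+ k * b))).
Proof. rewrite Re_expmap; congr (limn (series _)); apply: funext => k; by rewrite iterE mx2E. Qed.
Lemma RE10 t a d b c : cRe (expmap t L (mx2 a%:C b c d%:C) 1 0) =
  limn (series (fun k => t ^+ k / (k`!)%:R * cRe (lam' w gp gm gz ^+ k * c))).
Proof. rewrite Re_expmap; congr (limn (series _)); apply: funext => k; by rewrite iterE mx2E. Qed.


Lemma conds (H : forall t : R, 0 <= t -> unital_schwarz (expmap t L)) :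
  let GT := GammaT gp gm gz in
  let M := 1 + `|gm| + `|gp| + `|GT| + `|w| in
  forall t, 0 < t -> 2 * (t * M) <= 1 ->
  [/\ 0 <= t * (gm + 6 * M^+2 * t), 0 <= t * (gp + 6 * M^+2 * t),
      0 <= t * (2 * GT - gp + 6 * M^+2 * t) & 0 <= t * (2 * GT - gm + 6 * M^+2 * t)].
Proof.
move=> GT M t t0 tM.
have [_ _ HS] := H t (ltW t0).
set N1 := `|gm| + `|gp|.
set N2 := `|- GT| + `|w|.
set N3 := `|- GT| + `|- w|.
have N10 : 0 <= N1 by rewrite addr_ge0.
have N20 : 0 <= N2 by rewrite addr_ge0.
have N30 : 0 <= N3 by rewrite addr_ge0.
have N1M : N1 <= M by rewrite /N1 /M; have := normr_ge0 GT; have := normr_ge0 w; lra.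
have N2M : N2 <= M by rewrite /N2 /M normrN; have := normr_ge0 gm; have := normr_ge0 gp; lra.
have N3M : N3 <= M by rewrite /N3 /M !normrN; have := normr_ge0 gm; have := normr_ge0 gp; lra.
have tN1 : 2 * (t * N1) <= 1 by nra.
have tN2 : 2 * (t * N2) <= 1 by nra.
have tN3 : 2 * (t * N3) <= 1 by nra.
have t0' := ltW t0.
have bd (a d : R) : `|a| + `|d| = 1 -> forall k,
    `|(iter k (dstep gp gm) (a, d)).1| <= N1 ^+ k /\ `|(iter k (dstep gp gm) (a, d)).2| <= N1 ^+ k.
  move=> ad k; have := dbound gp gm k a d; rewrite ad mulr1.
  have := normr_ge0 (iter k (dstep gp gm) (a, d)).1.
  have := normr_ge0 (iter k (dstep gp gm) (a, d)).2.
  by split; lra.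
have bl k : `|cRe (lam w gp gm gz ^+ k * 1)| <= N2 ^+ k.
  rewrite mulr1 lamE; have := cbound (- GT) w k.
  have := normr_ge0 (cIm (((- GT) +i* w) ^+ k)); lra.
have bl' k : `|cRe (lam' w gp gm gz ^+ k * 1)| <= N3 ^+ k.
  rewrite mulr1 lam'E; have := cbound (- GT) (- w) k.
  have := normr_ge0 (cIm (((- GT) +i* (- w)) ^+ k)); lra.
have eA : adj (mx2 0 1 0 0) * mx2 0 1 0 0 = mx2 (0:R)%:C 0 0 (1:R)%:C.
  rewrite adj_mx2 mx2_mul conjc0 conjc1; apply: mx2_eq; by rewrite ?mul0r ?mulr0 ?addr0 ?add0r ?mul1r.
have eB : adj (mx2 0 0 1 0) * mx2 0 0 1 0 = mx2 (1:R)%:C 0 0 (0:R)%:C.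
  rewrite adj_mx2 mx2_mul conjc0 conjc1; apply: mx2_eq; by rewrite ?mul0r ?mulr0 ?addr0 ?add0r ?mul1r.
have e01 : mx2 0 1 0 0 = mx2 (0:R)%:C 1 0 (0:R)%:C by [].
have e10 : mx2 0 0 1 0 = mx2 (0:R)%:C 0 1 (0:R)%:C by [].
have S1 := @schwarz_entry _ HS (mx2 0 1 0 0) 0 0.
have S2 := @schwarz_entry _ HS (mx2 0 1 0 0) 1 0.
have S3 := @schwarz_entry _ HS (mx2 0 0 1 0) 1 1.
have S4 := @schwarz_entry _ HS (mx2 0 0 1 0) 0 1.
rewrite eA RE00 in S1.
rewrite eA RE11 e01 RE01 in S2.
rewrite eB RE11 in S3.
rewrite eB RE00 e10 RE10 in S4.
have h01 : `|0 : R| + `|1 : R| = 1 by rewrite normr0 normr1 add0r.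
have h10 : `|1 : R| + `|0 : R| = 1 by rewrite normr0 normr1 addr0.
have F1 := series_fo (fun k => (iter k (dstep gp gm) (0, 1)).1) N1 t N10 (fun k => proj1 (bd 0 1 h01 k)) t0' tN1.
have F2 := series_fo (fun k => (iter k (dstep gp gm) (0, 1)).2) N1 t N10 (fun k => proj2 (bd 0 1 h01 k)) t0' tN1.
have F3 := series_fo (fun k => cRe (lam w gp gm gz ^+ k * 1)) N2 t N20 bl t0' tN2.
have F4 := series_fo (fun k => (iter k (dstep gp gm) (1, 0)).2) N1 t N10 (fun k => proj2 (bd 1 0 h10 k)) t0' tN1.
have F5 := series_fo (fun k => (iter k (dstep gp gm) (1, 0)).1) N1 t N10 (fun k => proj1 (bd 1 0 h10 k)) t0' tN1.
have F6 := series_fo (fun k => cRe (lam' w gp gm gz ^+ k * 1)) N3 t N30 bl' t0' tN3.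
have c0 : cRe (lam w gp gm gz ^+ 0 * 1) = 1 by rewrite expr0 mulr1.
have c1 : cRe (lam w gp gm gz ^+ 1 * 1) = - GT by rewrite expr1 mulr1 lamE.
have c0' : cRe (lam' w gp gm gz ^+ 0 * 1) = 1 by rewrite expr0 mulr1.
have c1' : cRe (lam' w gp gm gz ^+ 1 * 1) = - GT by rewrite expr1 mulr1 lam'E.
rewrite c0 c1 in F3; rewrite c0' c1' in F6.
have d1 : (iter 0 (dstep gp gm) (0, 1)).1 = 0 by [].
have d2 : (iter 1 (dstep gp gm) (0, 1)).1 = gm by rewrite /= subr0 mulr1.
have d3 : (iter 0 (dstep gp gm) (0, 1)).2 = 1 by [].
have d4 : (iter 1 (dstep gp gm) (0, 1)).2 = - gp by rewrite /= sub0r mulrN1.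
have d5 : (iter 0 (dstep gp gm) (1, 0)).2 = 0 by [].
have d6 : (iter 1 (dstep gp gm) (1, 0)).2 = gp by rewrite /= subr0 mulr1.
have d7 : (iter 0 (dstep gp gm) (1, 0)).1 = 1 by [].
have d8 : (iter 1 (dstep gp gm) (1, 0)).1 = - gm by rewrite /= sub0r mulrN1.
rewrite d1 d2 in F1; rewrite d3 d4 in F2; rewrite d5 d6 in F4; rewrite d7 d8 in F5.
case/andP: F1 => _ F1'; case/andP: F2 => _ F2'; case/andP: F3 => F3 _.
case/andP: F4 => _ F4'; case/andP: F5 => _ F5'; case/andP: F6 => F6 _.
have q1 : (t * N1) ^+ 2 <= t * (t * M ^+ 2).
  rewrite exprMn mulrA -expr2; apply: ler_wpM2l; first exact: sqr_ge0.
  by rewrite !expr2; apply: ler_pM.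
have q2 : (t * N2) ^+ 2 <= t * (t * M ^+ 2).
  rewrite exprMn mulrA -expr2; apply: ler_wpM2l; first exact: sqr_ge0.
  by rewrite !expr2; apply: ler_pM.
have q3 : (t * N3) ^+ 2 <= t * (t * M ^+ 2).
  rewrite exprMn mulrA -expr2; apply: ler_wpM2l; first exact: sqr_ge0.
  by rewrite !expr2; apply: ler_pM.
exact: (final_alg _ _ _ _ _ _ _ _ _ _ _ _ _ _ _ _ t0 q1 q2 q3 F1' F2' F3 F4' F5' F6 S1 S2 S3 S4).
Qed.

Lemma main_ineq (H : forall t : R, 0 <= t -> unital_schwarz (expmap t L)) :
  let GT := GammaT gp gm gz in
  [/\ 0 <= gm, 0 <= gp, 0 <= 2 * GT - gp & 0 <= 2 * GT - gm].
Proof.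
move=> GT.
have C := conds H.
set M := 1 + `|gm| + `|gp| + `|GT| + `|w| in C.
have M1 : 1 <= M by rewrite /M; have := normr_ge0 gm; have := normr_ge0 gp;
  have := normr_ge0 GT; have := normr_ge0 w; lra.
have M0 : 0 < 2 * M by lra.
have c0 : 0 < 1 / (2 * M) by rewrite divr_gt0.
have K0 : 0 <= 6 * M ^+ 2 by rewrite mulr_ge0 ?sqr_ge0.
have tt t : 0 < t -> t <= 1 / (2 * M) -> 2 * (t * M) <= 1.
  by move=> t0; rewrite ler_pdivlMr // => h; lra.
split.
- apply: (lim0 _ _ _ c0 K0) => t t0 tc; have [h _ _ _] := C t t0 (tt t t0 tc).
  by rewrite pmulr_rge0 // mulrC in h.
- apply: (lim0 _ _ _ c0 K0) => t t0 tc; have [_ h _ _] := C t t0 (tt t t0 tc).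
  by rewrite pmulr_rge0 // mulrC in h.
- apply: (lim0 _ _ _ c0 K0) => t t0 tc; have [_ _ h _] := C t t0 (tt t t0 tc).
  by rewrite pmulr_rge0 // mulrC in h.
- apply: (lim0 _ _ _ c0 K0) => t t0 tc; have [_ _ _ h] := C t t0 (tt t t0 tc).
  by rewrite pmulr_rge0 // mulrC in h.
Qed.




End Main.
End S.

Local Close Scope complex_scope.

Theorem mainTheorem10 (R : realType) (w gp gm gz : R) :
  (forall t : R, 0 <= t -> unital_schwarz (expmap t (Ldag w gp gm gz))) ->
  let Gamma := 2 * GammaT gp gm gz + GammaL gp gm in
  [/\ GammaT gp gm gz <= 2 / 3 * Gamma,
      GammaL gp gm <= 2 / 3 * Gamma &
      GammaL gp gm <= 4 * GammaT gp gm gz].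
Proof.
move=> H Gamma; have [h1 h2 h3 h4] := @main_ineq R w gp gm gz H.
rewrite /Gamma /GammaL /GammaT in h3 h4 *; split; lra.
Qed.
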